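(* For all positive integers $n,m$, \[s\text{-}sat(Q_n,Q_m)<\Big(m^2+\frac{m}{2}\Big)2^n.\]
   Context: $Q_n$ is the hypercube on $\{0,1\}^n$ with edges between vertices differing in exactly one coordinate. A copy of $F$ is a subgraph isomorphic to $F$. A graph $G$ is $(Q_n,F)$-semi-saturated if $G$ is a subgraph of $Q_n$ and adding any edge of $E(Q_n)\setminus E(G)$ increases the number of copies of $F$. $s\text{-}sat(Q_n,F)$ is the minimum number of edges of a $(Q_n,F)$-semi-saturated graph. *)

(* Defs.v *)
From HB Require Import structures.
From mathcomp Require Import all_boot all_order all_algebra.
Set Implicit Arguments. Unset Strict Implicit. Unset Printing Implicit Defensive.

Definition vert (n : nat) := {ffun 'I_n -> bool}.

Definition qadj (n : nat) (u v : vert n) : bool :=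
  #|[set i : 'I_n | u i != v i]| == 1%N.

Definition qedges (n : nat) : {set {set vert n}} :=
  [set e : {set vert n} | [exists u : vert n, exists v : vert n,
      (e == [set u; v]) && qadj u v]].

Definition copies (n m : nat) (E : {set {set vert n}}) :
    {set {set vert n} * {set {set vert n}}} :=
  [set WS : {set vert n} * {set {set vert n}} |
     (WS.2 \subset E) &&
     [exists phi : {ffun vert m -> vert n},
        [&& injectiveb phi,
            WS.1 == phi @: [set: vert m] &
            WS.2 == [set (phi @: e) | e : {set vert m} in qedges m]]]].

Arguments copies : clear implicits.

Definition semisat (n m : nat) (E : {set {set vert n}}) : bool :=
  (E \subset qedges n) &&
  [forall e in qedges n :\: E, #|copies n m E| < #|copies n m (e |: E)|].

(* s-sat(Q_n, Q_m): minimum number of edges of a semi-saturated graph.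
   (Q_n itself is semi-saturated, so #|qedges n| is a valid initial value.) *)

Arguments semisat : clear implicits.
Definition ssat (n m : nat) : nat :=
  \big[minn/#|qedges n|]_(E : {set {set vert n}} | semisat n m E) #|E|.

(* Main.v *)
Require Import Defs.
From HB Require Import structures.
From mathcomp Require Import all_boot all_order all_algebra.
From mathcomp Require Import zify ring lra.
Set Implicit Arguments. Unset Strict Implicit. Unset Printing Implicit Defensive.

Notation L k := {ffun 'I_k -> bool}.
Definition lz k : L k := [ffun => false].
Definition T m k : finType := {p : 'I_m * L k | p.2 != lz k}.

Definition flip n (x : vert n) (d : 'I_n) : vert n :=
  [ffun i => x i (+) (i == d)].
Arguments flip {n}.

Definition sig n m k (io : T m k -> 'I_n) (r : 'I_m) (x : vert n) : L k :=
  [ffun b => \big[addb/false]_(t : T m k | (val t).1 == r)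
                (x (io t) && (val t).2 b)].
Arguments sig {n m k}.

Lemma imset2E (aT rT : finType) (f : aT -> rT) a b :
  f @: [set a; b] = [set f a; f b].
Proof.
apply/setP => z; apply/imsetP/set2P => [[x /set2P[]->->]|[]->];
  [left|right|exists a|exists b]; rewrite ?set21 ?set22 //.
Qed.

Lemma flipK n (d : 'I_n) : involutive (fun x : vert n => flip x d).
Proof. by move=> x; apply/ffunP => i; rewrite !ffunE -addbA addbb addbF. Qed.

Lemma flip_inj n (d : 'I_n) : injective (fun x : vert n => flip x d).
Proof. exact: inv_inj (@flipK n d). Qed.

Lemma sig_upd n m k (io : T m k -> 'I_n) r (x u : vert n) (t0 : T m k) :
  (val t0).1 = r ->
  (forall t : T m k, (val t).1 == r -> x (io t) = u (io t) (+) (t == t0)) ->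
  sig io r x = [ffun b => sig io r u b (+) (val t0).2 b].
Proof.
move=> ht0 hx; apply/ffunP => b; rewrite !ffunE.
rewrite (bigD1 t0) ?ht0 //= (bigD1 t0 (P := fun t : T m k => (val t).1 == r)) ?ht0 //=.
rewrite hx ?ht0 // eqxx addbT.
rewrite (eq_bigr (fun t : T m k => u (io t) && (val t).2 b)); last first.
  by move=> t /andP[ht htn]; rewrite hx // (negbTE htn) addbF.
by case: (u _); case: ((val t0).2 b) => //=; rewrite ?addbT ?addbF ?negbK // addbC.
Qed.

Lemma sig_same n m k (io : T m k -> 'I_n) r (x u : vert n) :
  (forall t : T m k, (val t).1 == r -> x (io t) = u (io t)) ->
  sig io r x = sig io r u.
Proof.
move=> hx; apply/ffunP => b; rewrite !ffunE.
by apply: eq_bigr => t ht; rewrite hx.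
Qed.

Definition hub n m k (io : T m k -> 'I_n) (x : vert n) :=
  [exists r, sig io r x == lz k].
Arguments hub {n m k}.

Definition Ecs n m k (io : T m k -> 'I_n) : {set {set vert n}} :=
  [set e in qedges n | [exists x in e, hub io x]].
Arguments Ecs {n m k}.

Lemma qadjP n (u v : vert n) :
  reflect (exists j, v = flip u j) (qadj u v).
Proof.
apply: (iffP idP).
  rewrite /qadj => /cards1P[j hj]; exists j; apply/ffunP => i; rewrite ffunE.
  have := congr1 (fun A : {set 'I_n} => i \in A) hj; rewrite !inE.
  by case: (i == j) => /=; case: (u i); case: (v i).
move=> [j ->]; rewrite /qadj; apply/cards1P; exists j; apply/setP => i.
by rewrite !inE ffunE; case: (u i); case: (i == j).
Qed.

Lemma qedgesP n (e : {set vert n}) :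
  reflect (exists u j, e = [set u; flip u j]) (e \in qedges n).
Proof.
apply: (iffP idP).
  rewrite inE => /existsP[u /existsP[v /andP[/eqP -> /qadjP[j ->]]]].
  by exists u, j.
move=> [u [j ->]]; rewrite inE; apply/existsP; exists u; apply/existsP.
exists (flip u j); rewrite eqxx /=; apply/qadjP; by exists j.
Qed.

Lemma copy_exists n m k (io : T m k -> 'I_n) (ioI : injective io) (hm : 0 < m)
  (u : vert n) (j : 'I_n) (nh : forall r, sig io r u != lz k) :
  exists phi : {ffun vert m -> vert n},
    [/\ injective phi,
        exists2 e0, e0 \in qedges m & phi @: e0 = [set u; flip u j] &
        forall f, f \in qedges m -> phi @: f = [set u; flip u j] \/ phi @: f \in Ecs io].
Proof.
pose r0 := if [pick t : T m k | io t == j] is Some t then (val t).1 else Ordinal hm.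
have hr0 : forall t, io t = j -> (val t).1 = r0.
  move=> t htj; rewrite /r0; case: pickP => [t' /eqP h|/(_ t)].
    by rewrite -htj in h; rewrite (ioI _ _ h).
  by rewrite htj eqxx.
pose tc (c : 'I_m) : T m k := exist (fun p : 'I_m * L k => p.2 != lz k) (c, sig io c u) (nh c).
pose dir (c : 'I_m) := if c == r0 then j else io (tc c).
have dirI : injective dir.
  move=> c1 c2; rewrite /dir.
  case: eqP => [->|h1]; case: eqP => [->|h2] //.
  - by move=> /esym /hr0 /= h; case: h2.
  - by move=> /hr0 /= h; case: h1.
  by move=> /ioI /(congr1 (fun t : T m k => (val t).1)).
have exdir : forall (y : vert m) c, [exists c', y c' && (dir c' == dir c)] = y c.
  move=> y c; apply/existsP/idP => [[c' /andP[hy /eqP /dirI <-]] //|hy].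
  by exists c; rewrite hy eqxx.
pose phi := [ffun y : vert m => [ffun i => u i (+) [exists c, y c && (dir c == i)]]].
have phid : forall y c, phi y (dir c) = u (dir c) (+) y c.
  by move=> y c; rewrite !ffunE exdir.
have phiI : injective phi.
  move=> y1 y2 h; apply/ffunP => c.
  by apply: (@addbI (u (dir c))); rewrite -!phid h.
have dirr0 : dir r0 = j by rewrite /dir eqxx.
have phiflip : forall y c, phi (flip y c) = flip (phi y) (dir c).
  move=> y c; apply/ffunP => i.
  case: (pickP (fun c' => dir c' == i)) => [c' /eqP <- | hnone].
    by rewrite phid !ffunE exdir (inj_eq dirI) addbA.
  rewrite /flip /phi !ffunE.
  have -> : (i == dir c) = false by apply/negbTE/eqP => hi; have := hnone c; rewrite hi eqxx.
  have ex0 : forall y' : vert m, [exists c', y' c' && (dir c' == i)] = false.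
    by move=> y'; apply/negbTE/existsP => [[c' /andP[_ h]]]; have := hnone c'; rewrite h.
  by rewrite (ex0 y) (ex0 [ffun i0 => y i0 (+) (i0 == c)]) !addbF.
have phihub : forall (y : vert m) c, c != r0 -> y c -> hub io (phi y).
  move=> y c hc hy; apply/existsP; exists c.
  rewrite (@sig_upd _ _ _ io c (phi y) u (tc c)) //.
    by apply/eqP/ffunP => b; rewrite !ffunE addbb.
  move=> t /eqP ht; rewrite !ffunE; congr (_ (+) _).
  case: (eqVneq t (tc c)) => [->|htn].
    apply/existsP; exists c; rewrite hy /= /dir (negbTE hc) //.
  apply/existsP => [[c' /andP[hy' /eqP hd]]].
  move: hd; rewrite /dir; case: eqP => [hc'|hc'].
    by move=> /esym /hr0; rewrite ht => hcr; rewrite hcr eqxx in hc.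
  move=> /ioI htc; move: (htc) => /(congr1 (fun t : T m k => (val t).1)) /=.
  by rewrite ht => hcc; rewrite -htc hcc eqxx in htn.
pose y0 : vert m := [ffun => false].
have phiy0 : phi y0 = u.
  by apply/ffunP => i; rewrite !ffunE; case: existsP => [[c]|]; rewrite ?ffunE ?addbF.
have hset : forall y : vert m, phi @: [set y; flip y r0] = [set phi y; flip (phi y) j].
  by move=> y; rewrite imset2E phiflip dirr0.
exists phi; split => //.
  exists [set y0; flip y0 r0]; first by apply/qedgesP; exists y0, r0.
  by rewrite hset phiy0.
move=> f /qedgesP[y [c ->]]; rewrite imset2E phiflip.
case: (boolP [exists c1, (c1 != r0) && (y c1 || flip y c c1)]) => [/existsP[c1 /andP[hc1 hy]]|hno].
  right; rewrite inE; apply/andP; split; first by apply/qedgesP; exists (phi y), (dir c).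
  apply/existsP; case/orP: hy => hy.
    by exists (phi y); rewrite set21 (phihub y c1).
  by exists (flip (phi y) (dir c)); rewrite set22 -phiflip (phihub _ c1).
left.
have hz : forall c1, c1 != r0 -> y c1 = false /\ flip y c c1 = false.
  move=> c1 hc1; suff: ~~ (y c1 || flip y c c1) by case: (y c1); case: (flip y c c1).
  apply/negP => h; move/negP: hno; apply; apply/existsP; exists c1; by rewrite hc1.
have hcr : c = r0.
  apply/eqP; apply/negPn/negP => hc; have [h1 h2] := hz c hc.
  by move: h2; rewrite ffunE h1 eqxx.
subst c; rewrite dirr0.
have : phi y = u \/ phi y = flip u j.
  case hyr: (y r0); [right|left].
    have -> : y = flip y0 r0.
      apply/ffunP => c1; rewrite !ffunE; case: (eqVneq c1 r0) => [->|h]; first by rewrite hyr.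
      by rewrite (hz c1 h).1.
    by rewrite phiflip phiy0 dirr0.
  have -> : y = y0.
    apply/ffunP => c1; rewrite !ffunE; case: (eqVneq c1 r0) => [->|h]; first by rewrite hyr.
    by rewrite (hz c1 h).1.
  by [].
case=> ->; first by [].
by rewrite flipK setUC.
Qed.

Lemma Ecs_semisat n m k (io : T m k -> 'I_n) (ioI : injective io) (hm : 0 < m) :
  semisat n m (Ecs io).
Proof.
apply/andP; split.
  by apply/subsetP => e; rewrite inE => /andP[].
apply/forallP => e; apply/implyP; rewrite in_setD => /andP[heE heq].
have nhub : forall x, x \in e -> ~~ hub io x.
  move=> x hx; apply/negP => hh; move: heE; rewrite inE heq /=.
  by move/negP; apply; apply/existsP; exists x; rewrite hx.
move/qedgesP: (heq) => [u [j he]].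
have nh : forall r, sig io r u != lz k.
  move=> r; apply/negP => hr; have := nhub u; rewrite he set21 => /(_ isT).
  by move/negP; apply; apply/existsP; exists r.
have [phi [phiI [e0 he0 phie0] hphi]] := copy_exists ioI hm j nh.
apply: proper_card; apply/properP; split.
  apply/subsetP => WS; rewrite !inE => /andP[hs hex]; rewrite hex andbT.
  by apply: subset_trans hs (subsetUr _ _).
exists (phi @: [set: vert m], [set phi @: f | f : {set vert m} in qedges m]).
  rewrite inE; apply/andP; split.
    apply/subsetP => S /imsetP[f hf ->]; rewrite in_setU1.
    by case: (hphi f hf) => ->; rewrite ?he ?eqxx ?orbT.
  apply/existsP; exists phi; rewrite !eqxx andbT andbT.
  by apply/injectiveP.
rewrite inE negb_and; apply/orP; left; apply/negP => /subsetP hs.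
have : e \in [set phi @: f | f : {set vert m} in qedges m] by apply/imsetP; exists e0; rewrite // phie0 he.
by move/hs => /= heE'; rewrite heE' in heE.
Qed.

Definition Cs n m k (io : T m k -> 'I_n) (r : 'I_m) : {set vert n} :=
  [set x : vert n | sig io r x == lz k].
Arguments Cs {n m k}.

Definition inblk n m k (io : T m k -> 'I_n) (r : 'I_m) (i : 'I_n) :=
  [exists t : T m k, ((val t).1 == r) && (io t == i)].
Arguments inblk {n m k}.

Lemma sumb (U : finType) (P : pred U) : \sum_(x : U) (P x : nat) = #|P|.
Proof. by rewrite -sum1_card [RHS]big_mkcond; apply: eq_bigr => x _; rewrite unfold_in; case: (P x). Qed.

Lemma sumbS (U : finType) (A : {set U}) : \sum_(x : U) ((x \in A) : nat) = #|A|.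
Proof. by rewrite -sum1_card [RHS]big_mkcond; apply: eq_bigr => x _; case: (x \in A). Qed.

Lemma card_vert n : #|{: vert n}| = 2 ^ n.
Proof. by rewrite /vert card_ffun card_bool card_ord. Qed.

Lemma C_card n m k (io : T m k -> 'I_n) (ioI : injective io) r :
  #|Cs io r| * 2 ^ k <= 2 ^ n.
Proof.
pose D := setX (Cs io r) [set: L k].
have hD : #|D| = #|Cs io r| * 2 ^ k.
  by rewrite cardsX cardsT card_ffun card_bool card_ord.
pose F (p : vert n * L k) := if (insub (r, p.2) : option (T m k)) is Some t then flip p.1 (io t) else p.1.
have key : forall p, p.1 \in Cs io r -> sig io r (F p) = p.2.
  move=> [x l] /=; rewrite inE => /eqP hx; rewrite /F /=.
  case: insubP => [t hnz ht|hz].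
    rewrite (@sig_upd _ _ _ io r (flip x (io t)) x t); last first.
    - by move=> t' _; rewrite ffunE (inj_eq ioI).
    - by rewrite ht.
    by rewrite hx ht; apply/ffunP => b; rewrite !ffunE.
  by move: hz; rewrite negbK /= => /eqP ->.
have Finj : {in D &, injective F}.
  move=> [x1 l1] [x2 l2]; rewrite !inE /= !andbT => h1 h2 hF.
  have hl : l1 = l2.
    have k1 := key (x1, l1); have k2 := key (x2, l2); rewrite /= ?inE in k1 k2.
    by rewrite -(k1 h1) -(k2 h2) hF.
  subst l2; congr (_, _); move: hF; rewrite /F /=.
  by case: insubP => [t _ _|_ //]; apply: flip_inj.
rewrite -hD -(card_in_imset Finj) -(card_vert n).
exact: max_card.
Qed.

Lemma blk_card n m k (io : T m k -> 'I_n) (ioI : injective io) r :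
  #|[pred i | inblk io r i]| <= 2 ^ k - 1.
Proof.
pose B := [set t : T m k | (val t).1 == r].
have h1 : #|[pred i | inblk io r i]| <= #|io @: B|.
  apply: subset_leq_card; apply/subsetP => i; rewrite inE => /existsP[t /andP[ht /eqP <-]].
  by apply: imset_f; rewrite inE.
apply: (leq_trans h1); apply: (leq_trans (leq_imset_card _ _)).
have hinj : {in B &, injective (fun t : T m k => (val t).2)}.
  move=> t1 t2; rewrite !inE => /eqP h1' /eqP h2' h; apply: val_inj.
  by move: h1' h2' h; case: (val t1) => a1 b1; case: (val t2) => a2 b2 /= -> -> ->.
rewrite -(card_in_imset hinj).
have -> : 2 ^ k - 1 = #|[set~ lz k]| by rewrite cardsC1 card_ffun card_bool card_ord subn1.
apply: subset_leq_card; apply/subsetP => l /imsetP[t _ ->].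
by rewrite !inE; case: t.
Qed.

Lemma half_card n m k (io : T m k -> 'I_n) r i :
  ~~ inblk io r i ->
  2 * \sum_(x : vert n) ((x \in Cs io r) && ~~ x i : nat) = #|Cs io r|.
Proof.
move=> hb.
have hC : forall x, (flip x i \in Cs io r) = (x \in Cs io r).
  move=> x; rewrite !inE (@sig_same _ _ _ io r (flip x i) x) //.
  move=> t ht; rewrite ffunE.
  have -> : (io t == i) = false.
    by apply/negbTE/negP => hti; move/negP: hb; apply; apply/existsP; exists t; rewrite ht.
  by rewrite addbF.
have e1 : \sum_(x : vert n) ((x \in Cs io r) && ~~ x i : nat) =
          \sum_(x : vert n) ((x \in Cs io r) && x i : nat).
  rewrite (reindex_inj (@flip_inj n i)) /=.
  by apply: eq_bigr => x _; rewrite hC ffunE eqxx addbT negbK.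
rewrite mul2n -addnn {2}e1 -big_split /= -sumbS.
by apply: eq_bigr => x _; case: (x \in Cs io r); case: (x i).
Qed.

Lemma E_card n m k (io : T m k -> 'I_n) (ioI : injective io) :
  2 * #|Ecs io| <= \sum_(r : 'I_m) (n + (2 ^ k - 1)) * #|Cs io r|.
Proof.
pose Z := [set p : 'I_m * (vert n * 'I_n) |
             (p.2.1 \in Cs io p.1) && (inblk io p.1 p.2.2 || ~~ p.2.1 p.2.2)].
pose g (p : 'I_m * (vert n * 'I_n)) : {set vert n} := [set p.2.1; flip p.2.1 p.2.2].
have hsub : Ecs io \subset g @: Z.
  apply/subsetP => e; rewrite inE => /andP[/qedgesP[u [j he]] /existsP[x /andP[hx hh]]].
  have hex : e = [set x; flip x j].
    move: hx; rewrite he => /set2P[->|->] //.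
    by rewrite flipK setUC.
  move/existsP: hh => [r hr].
  case hb: (inblk io r j || ~~ x j).
    by apply/imsetP; exists (r, (x, j)) => //; rewrite inE /= inE hr hb.
  move/negbT: hb; rewrite negb_or negbK => /andP[hb hxj].
  apply/imsetP; exists (r, (flip x j, j)); last by rewrite /g /= flipK setUC.
  rewrite inE /= !inE ffunE eqxx addbT hxj orbT andbT.
  rewrite (@sig_same _ _ _ io r (flip x j) x) //.
  move=> t ht; rewrite ffunE.
  have -> : (io t == j) = false.
    by apply/negbTE/negP => hti; move/negP: hb; apply; apply/existsP; exists t; rewrite ht.
  by rewrite addbF.
have h1 : #|Ecs io| <= #|Z|.
  exact: leq_trans (subset_leq_card hsub) (leq_imset_card _ _).
have hZ : #|Z| = \sum_(r : 'I_m) \sum_(i : 'I_n) \sum_(x : vert n)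
                   ((x \in Cs io r) && (inblk io r i || ~~ x i) : nat).
  rewrite -sumbS (eq_bigr (fun p => (((p.1, p.2) \in Z) : nat))); last by case.
  rewrite -(pair_bigA _ (fun r q => (((r, q) \in Z) : nat))); apply: eq_bigr => r _.
  rewrite (eq_bigr (fun q => (((r, (q.1, q.2)) \in Z) : nat))); last by case.
  rewrite -(pair_bigA _ (fun x i => (((r, (x, i)) \in Z) : nat))) exchange_big /=.
  by apply: eq_bigr => i _; apply: eq_bigr => x _; rewrite inE.
have hsum : forall r i, 2 * \sum_(x : vert n) ((x \in Cs io r) && (inblk io r i || ~~ x i) : nat)
                      = #|Cs io r| + inblk io r i * #|Cs io r|.
  move=> r i; case hb: (inblk io r i).
    have -> : \sum_(x : vert n) (((x \in Cs io r) && (true || ~~ x i)) : nat) = #|Cs io r|.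
      by rewrite -sumbS; apply: eq_bigr => x _; rewrite andbT.
    by rewrite mul1n mul2n addnn.
  by rewrite mul0n addn0 -(@half_card n m k io r i) ?hb.
apply: (leq_trans (leq_mul (leqnn 2) h1)); rewrite hZ big_distrr /=.
apply: leq_sum => r _; rewrite big_distrr /= (eq_bigr _ (fun i _ => hsum r i)) big_split /=.
rewrite sum_nat_const card_ord -big_distrl /= sumb mulnDl leq_add2l.
by rewrite leq_mul2r blk_card ?orbT.
Qed.

Lemma main_bound n m k (hm : 0 < m) (hk : m * (2 ^ k - 1) <= n) :
  exists E, semisat n m E /\ 2 ^ k * (2 * #|E|) <= m * (n + (2 ^ k - 1)) * 2 ^ n.
Proof.
have hT : #|T m k| <= n.
  rewrite /T card_sig.
  have -> : #|[pred x : 'I_m * L k | x.2 != lz k]| = #|setX [set: 'I_m] [set~ lz k]|.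
    by apply: eq_card => p; rewrite !inE.
  by rewrite cardsX cardsT cardsC1 card_ord card_ffun card_bool card_ord -subn1.
pose io (t : T m k) : 'I_n := widen_ord hT (enum_rank t).
have ioI : injective io.
  by move=> a b /(congr1 val) /= /val_inj /enum_rank_inj.
exists (Ecs io); split; first exact: Ecs_semisat.
rewrite mulnC.
apply: (leq_trans (leq_mul (E_card ioI) (leqnn _))).
rewrite big_distrl /=.
apply: (@leq_trans (\sum_(r : 'I_m) (n + (2 ^ k - 1)) * 2 ^ n)).
  apply: leq_sum => r _; rewrite -mulnA leq_mul2l C_card ?orbT //.
by rewrite sum_nat_const card_ord mulnA.
Qed.

Lemma arith (m n K N e : nat) : 0 < m -> 0 < K -> 0 < N -> n < 2 * m * K ->
  K * (2 * e) <= m * (n + (K - 1)) * N -> 2 * e < (2 * m ^ 2 + m) * N.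
Proof. move=> *; nia. Qed.

Import Order.TTheory GRing.Theory Num.Theory.
Local Open Scope ring_scope.

Lemma bigmin_le (I : finType) (P : pred I) (F : I -> nat) x0 j :
  P j -> (\big[minn/x0]_(i | P i) F i <= F j)%N.
Proof.
move=> hj; rewrite unlock.
have : j \in index_enum I by rewrite mem_index_enum.
elim: (index_enum I) => [//|a r IH] /=; rewrite in_cons => /orP[/eqP <-|hr].
  by rewrite hj geq_minl.
case: (P a); last exact: IH.
by rewrite geq_min IH ?orbT.
Qed.

Theorem theorem2 (n m : nat) (hn : (0 < n)%N) (hm : (0 < m)%N) :
  (ssat n m)%:R < ((m ^ 2)%:R + m%:R / 2) * (2 ^ n)%:R :> rat.
Proof.
pose k := trunc_log 2 (n %/ m + 1).
have hk1 : (2 ^ k <= n %/ m + 1)%N by apply: trunc_logP; rewrite ?addn1.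
have hk2 : (n %/ m + 1 < 2 ^ k.+1)%N by apply: trunc_log_ltn.
have hmk : (m * (2 ^ k - 1) <= n)%N.
  apply: (@leq_trans (m * (n %/ m))); first by rewrite leq_mul2l leq_subLR addnC hk1 orbT.
  by rewrite mulnC leq_trunc_div.
have hnk : (n < 2 * m * 2 ^ k)%N.
  have := ltn_pmod n hm; have := divn_eq n m; rewrite expnS in hk2; nia.
have [E [hE hb]] := main_bound hm hmk.
have hs : (ssat n m <= #|E|)%N.
  exact: bigmin_le.
have h2 : (2 * ssat n m < (2 * m ^ 2 + m) * 2 ^ n)%N.
  apply: (@leq_ltn_trans (2 * #|E|)); first by rewrite leq_mul2l hs orbT.
  apply: (arith hm (expn_gt0 2 k) (expn_gt0 2 n) hnk hb).
have h3 : (2 * ssat n m)%:R < ((2 * m ^ 2 + m) * 2 ^ n)%:R :> rat by rewrite ltr_nat.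
move: h3; rewrite !natrM natrD natrM.
set a := (ssat n m)%:R; set b := (m ^ 2)%:R; set c := m%:R; set d := (2 ^ n)%:R.
move=> h3.
have hb2 : b = c * c by rewrite /b /c natrX expr2.
rewrite hb2 in h3.
have -> : (c * c + c / 2) * d = ((2 * (c * c) + c) * d) / 2 by field.
rewrite ltr_pdivlMr //.
by rewrite mulrC.
Qed.
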